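(* Logical convergence does not in general imply convergence in the $n$-bisimulation topology: there exist a countable atom set $\Phi$, a finite agent set $I$, a logic $\Lambda$, an $\boldsymbol{\mathcal{L}}_\Lambda$ modal space $\boldsymbol{X}$ in which modal equivalence and bisimilarity coincide, a point $\boldsymbol{x}\in\boldsymbol{X}$ and a sequence $\boldsymbol{x}_1,\boldsymbol{x}_2,\dots$ in $\boldsymbol{X}$ that logically converges to $\boldsymbol{x}$ but does not converge to $\boldsymbol{x}$ in $(\boldsymbol{X},\mathcal{T}_B)$.
   Context: Given a countable set $\Phi$ of atoms and a finite set $I$ of agents, $\mathcal{L}$ is the multi-agent modal language $\varphi::=\top\mid p\mid\neg\varphi\mid\varphi\wedge\varphi\mid\square_i\varphi$. A logic $\Lambda$ is a normal modal logic over $\mathcal{L}$ extending $K$; $\boldsymbol{\varphi}$ is the class of formulas $\Lambda$-equivalent to $\varphi$ and $\boldsymbol{\mathcal{L}}_\Lambda$ the set of such classes. Kripke models have countable nonempty state sets, relations $R_i$ ($i\in I$) and a valuation of $\Phi$; pointed Kripke models $Ms$ are evaluated with standard semantics. For a set $X$ of pointed Kripke models, the $\boldsymbol{\mathcal{L}}_\Lambda$ modal space is $\boldsymbol{X}=\{\boldsymbol{x}:x\in X\}$ with $\boldsymbol{x}=\{y\in X:y\vDash\varphi\text{ iff }x\vDash\varphi\text{ for all }\varphi\in\mathcal{L}\}$. A sequence $\boldsymbol{x}_1,\boldsymbol{x}_2,\dots$ logically converges to $\boldsymbol{x}$ if for every $\varphi$ with $x\vDash\varphi$ there is $N$ with $x_n\vDash\varphi$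 for all $n\ge N$. When modal equivalence and bisimilarity coincide on $X$, the $n$-bisimulation metric is $d_B(\boldsymbol{x},\boldsymbol{y})=0$ if $x$ and $y$ are $n$-bisimilar for all $n\in\mathbb{N}_0$, and $d_B(\boldsymbol{x},\boldsymbol{y})=2^{-n}$ for the least $n$ such that $x,y$ are not $n$-bisimilar; $\mathcal{T}_B$ is the topology it induces. *)

(* Defs.v *)
From Stdlib Require Import Reals ClassicalEpsilon.
Open Scope R_scope.

Set Implicit Arguments.

Section Modal.
Variables (Phi I : Type).

Inductive form : Type :=
| FTop : form
| FAtom : Phi -> form
| FNeg : form -> form
| FAnd : form -> form -> form
| FBox : I -> form -> form.

Definition FImp (a b : form) : form := FNeg (FAnd a (FNeg b)).

Record kmodel : Type := KModel {
  kst : Type;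
  kst_countable : exists f : kst -> nat, forall s t, f s = f t -> s = t;
  kst_nonempty : inhabited kst;
  krel : I -> kst -> kst -> Prop;
  kval : Phi -> kst -> Prop }.

Record pmodel : Type := PModel { pmod : kmodel; ppt : kst pmod }.

Fixpoint sat (M : kmodel) (s : kst M) (f : form) : Prop :=
  match f with
  | FTop => True
  | FAtom p => kval M p s
  | FNeg g => ~ sat M s g
  | FAnd g h => sat M s g /\ sat M s h
  | FBox i g => forall t, krel M i s t -> sat M t g
  end.

Definition psat (x : pmodel) (f : form) : Prop := sat (pmod x) (ppt x) f.

Fixpoint peval (v : Phi -> Prop) (w : I -> form -> Prop) (f : form) : Prop :=
  match f with
  | FTop => True
  | FAtom p => v p
  | FNeg g => ~ peval v w g
  | FAnd g h => peval v w g /\ peval v w h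
  | FBox i g => w i g
  end.

Definition tautology (f : form) : Prop := forall v w, peval v w f.

Fixpoint subst (sg : Phi -> form) (f : form) : form :=
  match f with
  | FTop => FTop
  | FAtom p => sg p
  | FNeg g => FNeg (subst sg g)
  | FAnd g h => FAnd (subst sg g) (subst sg h)
  | FBox i g => FBox i (subst sg g)
  end.

Definition normal_logic (L : form -> Prop) : Prop :=
  (forall f, tautology f -> L f) /\
  (forall i a b, L (FImp (FBox i (FImp a b)) (FImp (FBox i a) (FBox i b)))) /\
  (forall a b, L (FImp a b) -> L a -> L b) /\
  (forall i a, L a -> L (FBox i a)) /\
  (forall sg a, L a -> L (subst sg a)).

Definition modal_equiv (x y : pmodel) : Prop := forall f, psat x f <-> psat y f.

Definition is_bisimulation (M N : kmodel) (Z : kst M -> kst N -> Prop) : Prop :=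
  forall s t, Z s t ->
    (forall p, kval M p s <-> kval N p t) /\
    (forall i s', krel M i s s' -> exists t', krel N i t t' /\ Z s' t') /\
    (forall i t', krel N i t t' -> exists s', krel M i s s' /\ Z s' t').

Definition bisimilar (x y : pmodel) : Prop :=
  exists Z : kst (pmod x) -> kst (pmod y) -> Prop,
    is_bisimulation (pmod x) (pmod y) Z /\ Z (ppt x) (ppt y).

Fixpoint nbisim (n : nat) (M N : kmodel) (s : kst M) (t : kst N) : Prop :=
  (forall p, kval M p s <-> kval N p t) /\
  match n with
  | O => True
  | S m =>
      (forall i s', krel M i s s' -> exists t', krel N i t t' /\ nbisim m M N s' t') /\
      (forall i t', krel N i t t' -> exists s', krel M i s s' /\ nbisim m M N s' t')
  end.

Definition n_bisimilar (n : nat) (x y : pmodel) : Prop :=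
  nbisim n (pmod x) (pmod y) (ppt x) (ppt y).

(* The n-bisimulation metric d_B (on representatives of classes). *)
Definition least_non_nbisim (x y : pmodel) : nat :=
  epsilon (inhabits 0%nat)
    (fun n => ~ n_bisimilar n x y /\ forall m, (m < n)%nat -> n_bisimilar m x y).

Definition dB (x y : pmodel) : R :=
  if excluded_middle_informative (forall n, n_bisimilar n x y) then 0
  else (/ 2) ^ (least_non_nbisim x y).

Definition openB (X : pmodel -> Prop) (U : pmodel -> Prop) : Prop :=
  forall y, X y -> U y ->
    exists eps, eps > 0 /\ forall z, X z -> dB y z < eps -> U z.

Definition converges_TB (X : pmodel -> Prop) (xs : nat -> pmodel) (x : pmodel) : Prop :=
  forall U, openB X U -> U x -> exists N, forall n, (N <= n)%nat -> U (xs n).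

Definition log_converges (xs : nat -> pmodel) (x : pmodel) : Prop :=
  forall f, psat x f -> exists N, forall n, (N <= n)%nat -> psat (xs n) f.

End Modal.

(* Main.v *)
Require Import Defs.
From Stdlib Require Import Reals Lia Lra Arith ClassicalEpsilon.

Definition Ph := nat.
Definition Ag := Empty_set.

Lemma unit_cnt : exists f : unit -> nat, forall s t, f s = f t -> s = t.
Proof. exists (fun _ => 0%nat). intros [] [] _; reflexivity. Qed.

Definition mk (v : nat -> Prop) : pmodel Ph Ag :=
  @PModel Ph Ag (@KModel Ph Ag unit unit_cnt (inhabits tt) (fun _ _ _ => False)
     (fun p _ => v p)) tt.

Definition x0 := mk (fun _ => False).
Definition xs (k : nat) := mk (fun p => p = k).

Lemma taut_sat (M : kmodel Ph Ag) s f :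
  peval (fun p => kval M p s) (fun i g => forall t, krel M i s t -> sat M t g) f
  <-> sat M s f.
Proof.
  induction f; simpl; try tauto.
Qed.

Definition msub (M : kmodel Ph Ag) (sg : Ph -> form Ph Ag) : kmodel Ph Ag :=
  @KModel Ph Ag (kst M) (kst_countable M) (kst_nonempty M) (krel M)
    (fun p t => sat M t (sg p)).

Lemma subst_sat M sg f : forall s, sat M s (subst sg f) <-> sat (msub M sg) s f.
Proof.
  induction f; intros s; simpl; try tauto.
  - rewrite IHf; tauto.
  - rewrite IHf1, IHf2; tauto.
  - destruct i.
Qed.

Definition Lam (f : form Ph Ag) : Prop := forall y, psat y f.

Lemma Lam_normal : normal_logic Lam.
Proof.
  unfold normal_logic, Lam, psat; repeat split.
  - intros f Ht y. apply taut_sat. apply Ht.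
  - intros i; destruct i.
  - intros a b H1 H2 y. specialize (H1 y). specialize (H2 y). simpl in H1. tauto.
  - intros i; destruct i.
  - intros sg a H y. apply subst_sat.
    exact (H (@PModel Ph Ag (msub (pmod y) sg) (ppt y))).
Qed.

Lemma bisim_sat (M N : kmodel Ph Ag) Z (HZ : is_bisimulation M N Z) f :
  forall s t, Z s t -> (sat M s f <-> sat N t f).
Proof.
  induction f; intros s t Hst; simpl.
  - tauto.
  - apply (HZ s t Hst).
  - rewrite (IHf s t Hst); tauto.
  - rewrite (IHf1 s t Hst), (IHf2 s t Hst); tauto.
  - destruct i.
Qed.

Lemma me_bis (y z : pmodel Ph Ag) : modal_equiv y z <-> bisimilar y z.
Proof.
  split.
  - intros H. exists (fun s t => forall p, kval (pmod y) p s <-> kval (pmod z) p t).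
    split.
    + intros s t Hst. split; [exact Hst|]. split; intros i; destruct i.
    + intros p. exact (H (@FAtom Ph Ag p)).
  - intros [Z [HZ Hp]] f. unfold psat. apply (@bisim_sat _ _ Z HZ f _ _ Hp).
Qed.

Fixpoint mx (f : form Ph Ag) : nat :=
  match f with
  | @FTop _ _ => 0
  | @FAtom _ _ p => p
  | @FNeg _ _ g => mx g
  | @FAnd _ _ g h => Nat.max (mx g) (mx h)
  | @FBox _ _ _ g => mx g
  end.

Lemma conv_lem f : forall n, (mx f < n)%nat -> (psat (xs n) f <-> psat x0 f).
Proof.
  unfold psat; induction f; intros n Hn; simpl in *.
  - tauto.
  - split; [lia | tauto].
  - rewrite (IHf n Hn); tauto.
  - rewrite (IHf1 n ltac:(lia)), (IHf2 n ltac:(lia)); tauto.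
  - destruct i.
Qed.

Lemma nb_iff n (M N : kmodel Ph Ag) s t :
  nbisim n M N s t <-> (forall p, kval M p s <-> kval N p t).
Proof.
  destruct n; simpl.
  - tauto.
  - split; [tauto|]. intros H. split; [exact H|]. split; intros i; destruct i.
Qed.

Lemma dB_small (y z : pmodel Ph Ag) : dB y z < / 2 -> forall p, kval (pmod y) p (ppt y) <-> kval (pmod z) p (ppt z).
Proof.
  unfold dB. destruct (excluded_middle_informative _) as [H|H].
  - intros _. apply (nb_iff 0). apply (H 0%nat).
  - intros Hlt. exfalso.
    assert (H0 : ~ n_bisimilar 0 y z).
    { intros H0. apply H. intros n. unfold n_bisimilar in *.
      apply nb_iff. apply (proj1 (nb_iff 0 _ _ _ _) H0). }
    unfold least_non_nbisim in Hlt.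
    destruct (epsilon_spec (inhabits 0%nat)
      (fun n => ~ n_bisimilar n y z /\ forall m, (m < n)%nat -> n_bisimilar m y z))
      as [_ Hm].
    { exists 0%nat. split; [exact H0| intros m Hm; lia]. }
    destruct (epsilon (inhabits 0%nat) _) as [|k].
    + simpl in Hlt. lra.
    + exfalso. apply H0. apply Hm. lia.
Qed.

Theorem proposition1 :
  exists (Phi I : Type),
    (exists f : Phi -> nat, forall p q, f p = f q -> p = q) /\
    (exists l : list I, forall i, List.In i l) /\
    exists (Lam : form Phi I -> Prop) (X : pmodel Phi I -> Prop)
           (x : pmodel Phi I) (xs : nat -> pmodel Phi I),
      normal_logic Lam /\
      (forall y, X y -> forall f, Lam f -> psat y f) /\
      (forall y z, X y -> X z -> (modal_equiv y z <-> bisimilar y z)) /\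
      X x /\ (forall n, X (xs n)) /\
      log_converges xs x /\
      ~ converges_TB X xs x.
Proof.
  exists Ph, Ag. split; [exists (fun p => p); auto|].
  split; [exists nil; intros i; destruct i|].
  exists Lam, (fun _ => True), x0, xs.
  split; [exact Lam_normal|].
  split; [intros y _ f Hf; apply Hf|].
  split; [intros y z _ _; apply me_bis|].
  split; [exact I|]. split; [intros; exact I|].
  split.
  - intros f Hf. exists (S (mx f)). intros n Hn. apply conv_lem; [lia|exact Hf].
  - intros Hc.
    destruct (Hc (fun y => forall p, ~ kval (pmod y) p (ppt y))) as [N HN].
    + intros y _ Hy. exists (/2). split; [lra|].
      intros z _ Hd p Hp. apply (Hy p). apply (dB_small _ _ Hd). exact Hp.
    + intros p Hp. exact Hp.
    + apply (HN N (le_n N) N). simpl. reflexivity.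
Qed.
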